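(* Let $(X,d^X)$ be a graph with bounded geometry that is roughly isometric to a Cayley graph $(G,S,d^S)$ of a group of polynomial volume growth, via a rough isometry $\phi:X\to G$. Then there exist a group $G'$ with a finite symmetric generating set $S'$, of polynomial volume growth with the same homogeneous dimension as $G$, and an injective rough isometry $\phi':X\to (G',d^{S'})$.
   Context: Graphs are connected, locally finite, without self-loops or multiple edges; $d^X$ is the path-length metric. Bounded geometry: $\deg x\leq\Delta$ for all vertices $x$ and some $\Delta>0$. For a group $G$ with finite symmetric generating set $S$, the Cayley graph has $x\sim y$ iff $x=ys$ for some $s\in S$, with word metric $d^S$. $G$ has polynomial volume growth if $|\{x:d^S(e,x)\leq n\}|\leq Cn^A$ for some $C,A>0$ and all $n\geq1$; the homogeneous dimension is the integer $D$ with $C_1n^D\leq|\{x:d^S(e,x)\leq n\}|\leq C_2n^D$ for all $n\geq 1$. A map $\phi:X\to Y$ of metric spaces is an $(a,b)$-rough isometry ($a\geq1,b\geq0$) if $a^{-1}d^X(x,y)-b\leq d^Y(\phi(x),\phi(y))\leq a\,d^X(x,y)+b$ for all $x,y\in X$ and $d^Y(z,\phi(X))\leq b$ for all $z\in Y$; a rough isometry is an $(a,b)$-rough isometry for some $a,b$. *)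

(* Defs.v *)
From Stdlib Require Import Reals Lra List ZArith ClassicalEpsilon.
Open Scope R_scope.

Inductive walk {V : Type} (adj : V -> V -> Prop) : nat -> V -> V -> Prop :=
| walk0 : forall x, walk adj 0 x x
| walkS : forall n x y z, adj x y -> walk adj n y z -> walk adj (S n) x z.

Definition is_min_walk_length {V : Type} (adj : V -> V -> Prop) (x y : V) (n : nat) : Prop :=
  walk adj n x y /\ forall m, walk adj m x y -> (n <= m)%nat.

(* path-length metric (meaningful when the graph is connected) *)
Definition gdist {V : Type} (adj : V -> V -> Prop) (x y : V) : nat :=
  epsilon (inhabits 0%nat) (is_min_walk_length adj x y).

Definition symmetric_rel {V : Type} (adj : V -> V -> Prop) : Prop :=
  forall x y, adj x y -> adj y x.

Definition no_self_loops {V : Type} (adj : V -> V -> Prop) : Prop :=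
  forall x, ~ adj x x.

Definition connected {V : Type} (adj : V -> V -> Prop) : Prop :=
  forall x y, exists n, walk adj n x y.

Definition deg_le {V : Type} (adj : V -> V -> Prop) (x : V) (Delta : nat) : Prop :=
  exists l : list V, (length l <= Delta)%nat /\ forall y, adj x y -> In y l.

Definition locally_finite {V : Type} (adj : V -> V -> Prop) : Prop :=
  forall x, exists Delta, deg_le adj x Delta.

Definition bounded_geometry {V : Type} (adj : V -> V -> Prop) : Prop :=
  exists Delta : nat, (0 < Delta)%nat /\ forall x, deg_le adj x Delta.

(* A graph in the sense of the paper: connected, locally finite,
   no self-loops (edges are a symmetric relation, so no multiple edges). *)
Definition is_graph {V : Type} (adj : V -> V -> Prop) : Prop :=
  symmetric_rel adj /\ no_self_loops adj /\ connected adj /\ locally_finite adj.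

Definition rough_isometry_ab {X Y : Type} (dX : X -> X -> nat) (dY : Y -> Y -> nat)
  (phi : X -> Y) (a b : R) : Prop :=
  1 <= a /\ 0 <= b /\
  (forall x y, / a * INR (dX x y) - b <= INR (dY (phi x) (phi y)) /\
               INR (dY (phi x) (phi y)) <= a * INR (dX x y) + b) /\
  (* d^Y(z, phi(X)) <= b ; the infimum of a nat-valued function is attained *)
  (forall z : Y, exists x : X, INR (dY z (phi x)) <= b).

Definition rough_isometry {X Y : Type} (dX : X -> X -> nat) (dY : Y -> Y -> nat)
  (phi : X -> Y) : Prop :=
  exists a b, rough_isometry_ab dX dY phi a b.

Record group := Group {
  gcar :> Type;
  gmul : gcar -> gcar -> gcar;
  ginv : gcar -> gcar;
  gone : gcar;
  gmulA : forall x y z, gmul x (gmul y z) = gmul (gmul x y) z;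
  gmul1l : forall x, gmul gone x = x;
  gmul1r : forall x, gmul x gone = x;
  gmulVl : forall x, gmul (ginv x) x = gone;
  gmulVr : forall x, gmul x (ginv x) = gone
}.

Definition symmetric_set {G : group} (S : list G) : Prop :=
  forall s, In s S -> In (ginv G s) S.

Definition word_prod {G : group} (l : list G) : G :=
  fold_right (gmul G) (gone G) l.

Definition generates {G : group} (S : list G) : Prop :=
  forall g : G, exists l : list G, (forall s, In s l -> In s S) /\ g = word_prod l.

Definition fin_sym_gen_set {G : group} (S : list G) : Prop :=
  symmetric_set S /\ generates S.

Definition cayley_adj {G : group} (S : list G) (x y : G) : Prop :=
  exists s, In s S /\ x = gmul G y s.

Definition word_dist {G : group} (S : list G) : G -> G -> nat :=
  gdist (cayley_adj S).

Definition ball_card_le {G : group} (S : list G) (n : nat) (c : R) : Prop :=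
  forall l : list G, NoDup l -> (forall x, In x l -> (word_dist S (gone G) x <= n)%nat) ->
    INR (length l) <= c.

Definition ball_card_ge {G : group} (S : list G) (n : nat) (c : R) : Prop :=
  exists l : list G, NoDup l /\ (forall x, In x l -> (word_dist S (gone G) x <= n)%nat) /\
    c <= INR (length l).

Definition polynomial_growth {G : group} (S : list G) : Prop :=
  exists C A : R, 0 < C /\ 0 < A /\
    forall n : nat, (1 <= n)%nat -> ball_card_le S n (C * Rpower (INR n) A).

Definition homogeneous_dimension {G : group} (S : list G) (D : Z) : Prop :=
  exists C1 C2 : R, 0 < C1 /\ 0 < C2 /\
    forall n : nat, (1 <= n)%nat ->
      ball_card_ge S n (C1 * powerRZ (INR n) D) /\
      ball_card_le S n (C2 * powerRZ (INR n) D).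

(* Main.v *)
Require Import Defs.
From Stdlib Require Import Reals List ZArith Arith Lia Lra Classical ClassicalEpsilon Wf_nat.

Lemma min_walk {V : Type} (adj : V -> V -> Prop) x y :
  (exists n, walk adj n x y) -> is_min_walk_length adj x y (gdist adj x y).
Proof.
  intro H.
  destruct (dec_inh_nat_subset_has_unique_least_element (fun n => walk adj n x y)
     (fun n => classic _) H) as [n [[Hn Hmin] _]].
  unfold gdist. apply epsilon_spec. exists n. split; auto.
Qed.

Lemma gdist_le {V : Type} (adj : V -> V -> Prop) x y m :
  walk adj m x y -> (gdist adj x y <= m)%nat.
Proof. intro H. apply (proj2 (min_walk adj x y (ex_intro _ m H))). exact H. Qed.

Lemma gdist_walk {V : Type} (adj : V -> V -> Prop) x y :
  (exists n, walk adj n x y) -> walk adj (gdist adj x y) x y.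
Proof. intro H. apply (proj1 (min_walk adj x y H)). Qed.

Lemma gdist_refl {V : Type} (adj : V -> V -> Prop) x : gdist adj x x = 0%nat.
Proof. pose proof (gdist_le adj x x 0 (walk0 adj x)). lia. Qed.

Lemma nat_above (r : R) : exists n : nat, r <= INR n.
Proof.
  destruct (archimed r) as [H1 _].
  destruct (Z_lt_le_dec (up r) 0) as [Hn|Hp].
  - exists 0%nat. simpl. apply IZR_lt in Hn. lra.
  - exists (Z.to_nat (up r)). rewrite INR_IZR_INZ, Z2Nat.id by lia. lra.
Qed.

Section Grp.
Variable G : group.
Lemma ginv1 : ginv G (gone G) = gone G.
Proof. rewrite <- (gmul1r G (ginv G (gone G))). apply gmulVl. Qed.
Lemma gmulKV (x y : G) : gmul G x (gmul G (ginv G x) y) = y.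
Proof. rewrite gmulA, gmulVr, gmul1l. reflexivity. Qed.
Lemma gmulVK (x y : G) : gmul G (ginv G x) (gmul G x y) = y.
Proof. rewrite gmulA, gmulVl, gmul1l. reflexivity. Qed.

Variable S : list G.
Hypothesis HS : fin_sym_gen_set S.

Lemma cayley_sym x y : cayley_adj S x y -> cayley_adj S y x.
Proof.
  intros [s [Hs ->]]. exists (ginv G s). split.
  - apply (proj1 HS). auto.
  - rewrite <- gmulA, gmulVr, gmul1r. reflexivity.
Qed.

Lemma walk_lmul c n x y : walk (cayley_adj S) n x y ->
  walk (cayley_adj S) n (gmul G c x) (gmul G c y).
Proof.
  induction 1. constructor.
  destruct H as [s [Hs ->]]. econstructor. exists s. split; [exact Hs|].
  rewrite gmulA. reflexivity. exact IHwalk.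
Qed.

Lemma walk_word l : (forall s, In s l -> In s S) ->
  walk (cayley_adj S) (length l) (gone G) (word_prod l).
Proof.
  induction l as [|s l IH]; intro Hl. constructor.
  simpl. apply walkS with s.
  - exists (ginv G s). split. apply (proj1 HS). apply Hl. left; auto.
    rewrite gmulVr. reflexivity.
  - rewrite <- (gmul1r G s) at 1. apply walk_lmul. apply IH. intros; apply Hl; right; auto.
Qed.

Lemma cayley_conn x y : exists n, walk (cayley_adj S) n x y.
Proof.
  destruct (proj2 HS (gmul G (ginv G x) y)) as [l [Hl Heq]].
  exists (length l). rewrite <- (gmul1r G x) at 1.
  replace y with (gmul G x (gmul G (ginv G x) y)) by apply gmulKV.
  apply walk_lmul. rewrite Heq. apply walk_word. exact Hl.
Qed.
End Grp.

Section ZN.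
Variable K : nat.
Definition ZNc := {k : nat | Nat.ltb k (S K) = true}.
Lemma zn_eq (x y : ZNc) : proj1_sig x = proj1_sig y -> x = y.
Proof.
  destruct x as [x px], y as [y py]; simpl; intro; subst.
  f_equal. apply Eqdep_dec.UIP_dec. decide equality.
Qed.
Definition zmk (a : nat) : ZNc.
Proof. exists (a mod S K). apply Nat.ltb_lt. apply Nat.mod_upper_bound. lia. Defined.
Lemma zmk_val a : proj1_sig (zmk a) = a mod S K. Proof. reflexivity. Qed.
Lemma zmk_eq a b : a mod S K = b mod S K -> zmk a = zmk b.
Proof. intro H; apply zn_eq; rewrite !zmk_val; exact H. Qed.
Lemma zmk_id (x : ZNc) : zmk (proj1_sig x) = x.
Proof. apply zn_eq. rewrite zmk_val. apply Nat.mod_small. destruct x; simpl. apply Nat.ltb_lt; auto. Qed.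
Lemma zval_lt (x : ZNc) : (proj1_sig x < S K)%nat.
Proof. destruct x; simpl. apply Nat.ltb_lt; auto. Qed.

Definition zadd (x y : ZNc) := zmk (proj1_sig x + proj1_sig y).
Definition zinv (x : ZNc) := zmk (S K - proj1_sig x).
Definition zzero := zmk 0.

Lemma zaddA x y z : zadd x (zadd y z) = zadd (zadd x y) z.
Proof. unfold zadd. apply zmk_eq. rewrite ?zmk_val.
  rewrite Nat.Div0.add_mod_idemp_r, Nat.Div0.add_mod_idemp_l. f_equal; lia. Qed.
Lemma zadd0l x : zadd zzero x = x.
Proof. unfold zadd, zzero. apply zn_eq. rewrite !zmk_val. pose proof (zval_lt x).
  rewrite Nat.Div0.mod_0_l, Nat.add_0_l, Nat.mod_small; auto. Qed.
Lemma zadd0r x : zadd x zzero = x.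
Proof. unfold zadd, zzero. apply zn_eq. rewrite !zmk_val. pose proof (zval_lt x).
  rewrite Nat.Div0.mod_0_l, Nat.add_0_r, Nat.mod_small; auto. Qed.
Lemma zaddVl x : zadd (zinv x) x = zzero.
Proof. unfold zadd, zinv, zzero. apply zmk_eq. rewrite ?zmk_val. pose proof (zval_lt x).
  rewrite Nat.Div0.add_mod_idemp_l. replace (S K - proj1_sig x + proj1_sig x)%nat with (S K) by lia.
  rewrite Nat.Div0.mod_same, Nat.Div0.mod_0_l. reflexivity. Qed.
Lemma zaddVr x : zadd x (zinv x) = zzero.
Proof. unfold zadd, zinv, zzero. apply zmk_eq. rewrite ?zmk_val. pose proof (zval_lt x).
  rewrite Nat.Div0.add_mod_idemp_r. replace (proj1_sig x + (S K - proj1_sig x))%nat with (S K) by lia.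
  rewrite Nat.Div0.mod_same, Nat.Div0.mod_0_l. reflexivity. Qed.

Definition ZNg : group := Group ZNc zadd zinv zzero zaddA zadd0l zadd0r zaddVl zaddVr.

Definition zenum : list ZNc := map zmk (seq 0 (S K)).
Lemma zenum_all x : In x zenum.
Proof. unfold zenum. rewrite <- (zmk_id x). apply in_map. apply in_seq. pose proof (zval_lt x). lia. Qed.
Lemma zenum_len : length zenum = S K.
Proof. unfold zenum. rewrite length_map, length_seq. reflexivity. Qed.
End ZN.

Section Prod.
Variables G H : group.
Definition pmul (x y : G * H) : G * H := (gmul G (fst x) (fst y), gmul H (snd x) (snd y)).
Definition pinv (x : G * H) : G * H := (ginv G (fst x), ginv H (snd x)).
Definition pone : G * H := (gone G, gone H).
Lemma pmulA x y z : pmul x (pmul y z) = pmul (pmul x y) z.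
Proof. unfold pmul; simpl. rewrite !gmulA. reflexivity. Qed.
Lemma pmul1l x : pmul pone x = x.
Proof. destruct x; unfold pmul; simpl. rewrite !gmul1l. reflexivity. Qed.
Lemma pmul1r x : pmul x pone = x.
Proof. destruct x; unfold pmul; simpl. rewrite !gmul1r. reflexivity. Qed.
Lemma pmulVl x : pmul (pinv x) x = pone.
Proof. destruct x; unfold pmul; simpl. rewrite !gmulVl. reflexivity. Qed.
Lemma pmulVr x : pmul x (pinv x) = pone.
Proof. destruct x; unfold pmul; simpl. rewrite !gmulVr. reflexivity. Qed.
Definition prodg : group := Group (G * H)%type pmul pinv pone pmulA pmul1l pmul1r pmulVl pmulVr.
End Prod.

Section Big.
Variable G : group.
Variable S : list G.
Hypothesis HS : fin_sym_gen_set S.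
Variable K : nat.
Definition G' : group := prodg G (ZNg K).
Definition liftS (s : G) : G' := (s, zzero K).
Definition vertS (h : ZNc K) : G' := (gone G, h).
Definition S' : list G' := map liftS S ++ map vertS (zenum K).
Ltac pcomp := cbv beta iota delta [liftS vertS G' prodg pinv pmul pone]; simpl; try f_equal.

Lemma word_lift l : word_prod (map liftS l) = (word_prod l, zzero K) :> G'.
Proof.
  induction l as [|s l IH]. reflexivity.
  simpl. transitivity (pmul G (ZNg K) (liftS s) (word_prod l, zzero K)). f_equal. exact IH. unfold liftS, pmul. simpl. f_equal. apply (zadd0l K).
Qed.

Lemma HS' : fin_sym_gen_set S'.
Proof.
  split.
  - intros s' Hs. unfold S' in *. apply in_app_or in Hs. apply in_or_app.
    destruct Hs as [Hs|Hs]; apply in_map_iff in Hs; destruct Hs as [x [<- Hx]].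
    + left. apply in_map_iff. exists (ginv G x). split.
      * unfold liftS. pcomp. symmetry. apply (ginv1 (ZNg K)).
      * apply (proj1 HS). exact Hx.
    + right. apply in_map_iff. exists (zinv K x). split.
      * unfold vertS. pcomp. symmetry. apply ginv1.
      * apply zenum_all.
  - intros [g h]. destruct (proj2 HS g) as [l [Hl ->]].
    exists (vertS h :: map liftS l). split.
    + intros s [<-|Hs]; unfold S'; apply in_or_app.
      * right. apply in_map. apply zenum_all.
      * left. apply in_map_iff in Hs. destruct Hs as [x [<- Hx]]. apply in_map. auto.
    + symmetry. transitivity (gmul G' (vertS h) (word_prod l, zzero K)). change (gmul G' (vertS h) (word_prod (map liftS l)) = gmul G' (vertS h) (word_prod l, zzero K)). f_equal. exact (word_lift l). pcomp. rewrite gmul1l. reflexivity. apply (zadd0r K).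
Qed.

Lemma walk_lift n g1 g2 (h : ZNc K) : walk (cayley_adj S) n g1 g2 ->
  walk (cayley_adj S') n ((g1, h) : G') (g2, h).
Proof.
  induction 1. constructor.
  destruct H as [s [Hs ->]]. apply walkS with (x := ((gmul G y s, h) : G')) (y := ((y,h) : G')); auto.
  exists (liftS s). split. unfold S'. apply in_or_app. left. apply in_map; auto.
  unfold liftS. pcomp;  symmetry. apply (zadd0r K).
Qed.

Lemma vert_step g (h1 h2 : ZNc K) : cayley_adj S' ((g, h1) : G') (g, h2).
Proof.
  exists (vertS (zadd K (zinv K h2) h1)). split.
  - unfold S'. apply in_or_app. right. apply in_map. apply zenum_all.
  - unfold vertS. pcomp. rewrite gmul1r; reflexivity. symmetry. apply (gmulKV (ZNg K)).
Qed.

Lemma walk_proj n (x y : G') : walk (cayley_adj S') n x y ->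
  exists m, (m <= n)%nat /\ walk (cayley_adj S) m (fst x) (fst y).
Proof.
  induction 1. exists 0%nat. split; auto. constructor.
  destruct IHwalk as [m [Hm Hw]].
  destruct H as [s [Hs ->]]. unfold S' in Hs. apply in_app_or in Hs.
  destruct Hs as [Hs|Hs]; apply in_map_iff in Hs; destruct Hs as [t [<- Ht]].
  - exists (Datatypes.S m). split. lia. apply walkS with (fst y); auto.
    exists t. split; auto.
  - exists m. split. lia. pcomp; rewrite gmul1r. exact Hw.
Qed.

Lemma conn' (x y : G') : exists n, walk (cayley_adj S') n x y.
Proof. apply cayley_conn. exact HS'. Qed.

Lemma d'_ge (x y : G') : (word_dist S (fst x) (fst y) <= word_dist S' x y)%nat.
Proof.
  pose proof (gdist_walk _ x y (conn' x y)) as W.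
  destruct (walk_proj _ _ _ W) as [m [Hm Hw]].
  pose proof (gdist_le _ _ _ _ Hw). unfold word_dist in *. lia.
Qed.

Lemma d'_flat g1 g2 (h : ZNc K) : (word_dist S' ((g1,h) : G') (g2,h) <= word_dist S g1 g2)%nat.
Proof.
  apply gdist_le. apply walk_lift. apply gdist_walk. apply cayley_conn. exact HS.
Qed.

Lemma d'_le (x y : G') : (word_dist S' x y <= Datatypes.S (word_dist S (fst x) (fst y)))%nat.
Proof.
  destruct x as [g1 h1], y as [g2 h2]. apply gdist_le. simpl fst.
  apply walkS with ((g1, h2) : G'). apply vert_step.
  apply walk_lift. apply gdist_walk. apply cayley_conn. exact HS.
Qed.
End Big.

Section Count.
Variable G : group.
Variable S : list G.
Hypothesis HS : fin_sym_gen_set S.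
Variable K : nat.

Definition zeqb (h1 h2 : ZNc K) := Nat.eqb (proj1_sig h1) (proj1_sig h2).
Lemma zeqb_true h1 h2 : zeqb h1 h2 = true <-> h1 = h2.
Proof. unfold zeqb. rewrite Nat.eqb_eq. split; intro H. apply zn_eq; auto. subst; auto. Qed.

Lemma count_gen (P : G -> Prop) c :
  (forall l : list G, NoDup l -> (forall x, In x l -> P x) -> INR (length l) <= c) ->
  forall (hs : list (ZNc K)) (l' : list (G * ZNc K)), NoDup l' ->
    (forall p, In p l' -> P (fst p) /\ In (snd p) hs) ->
    INR (length l') <= INR (length hs) * c.
Proof.
  intros Hc hs. induction hs as [|h hs IH]; intros l' Hnd Hl'.
  - destruct l' as [|p l']. simpl. lra.
    exfalso. destruct (Hl' p (or_introl eq_refl)) as [_ []].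
  - rewrite <- (filter_length (fun p => zeqb (snd p) h) l').
    set (f1 := filter (fun p => zeqb (snd p) h) l').
    set (f2 := filter (fun p => negb (zeqb (snd p) h)) l').
    assert (H1 : INR (length f1) <= c).
    { assert (E : map (fun g => (g, h)) (map fst f1) = f1).
      { rewrite map_map. rewrite <- (map_id f1) at 2. apply map_ext_in.
        intros [g h'] Hp. unfold f1 in Hp. apply filter_In in Hp. destruct Hp as [_ Hp].
        apply zeqb_true in Hp. simpl in Hp. subst. reflexivity. }
      replace (length f1) with (length (map fst f1)) by (rewrite length_map; auto). apply Hc.
      - apply (NoDup_map_inv (fun g => (g, h))). rewrite E. apply NoDup_filter. exact Hnd.
      - intros x Hx. apply in_map_iff in Hx. destruct Hx as [p [<- Hp]].
        unfold f1 in Hp. apply filter_In in Hp. apply (Hl' p (proj1 Hp)). }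
    assert (H2 : INR (length f2) <= INR (length hs) * c).
    { apply IH. apply NoDup_filter. exact Hnd.
      intros p Hp. unfold f2 in Hp. apply filter_In in Hp. destruct Hp as [Hp Hn].
      destruct (Hl' p Hp) as [HP Hin]. split; auto.
      destruct Hin as [Hin|Hin]; auto. exfalso. subst h.
      assert (zeqb (snd p) (snd p) = true) by (apply zeqb_true; auto).
      rewrite H in Hn. discriminate. }
    rewrite plus_INR. simpl length. rewrite S_INR. lra.
Qed.

Lemma L1 n c : ball_card_le S n c -> ball_card_le (S' G S K) n (INR (Datatypes.S K) * c).
Proof.
  intros Hc l' Hnd Hl'. rewrite <- (zenum_len K).
  apply (count_gen (fun g => (word_dist S (gone G) g <= n)%nat)); auto.
  intros p Hp. split. 2: apply zenum_all.
  pose proof (d'_ge G S HS K (gone (G' G K)) p). pose proof (Hl' p Hp). simpl fst in H. eapply Nat.le_trans; [exact H| exact H0].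
Qed.

Lemma lift_nodup (l : list G) : NoDup l -> NoDup (map (fun g => ((g, zzero K) : G' G K)) l).
Proof.
  intro H. apply NoDup_map_NoDup_ForallPairs; auto.
  intros x y _ _ E. injection E. auto.
Qed.

Lemma lift_ball n g : (word_dist S (gone G) g <= n)%nat ->
  (word_dist (S' G S K) (gone (G' G K)) ((g, zzero K) : G' G K) <= n)%nat.
Proof.
  intro H. pose proof (d'_flat G S HS K (gone G) g (zzero K)). 
  change (gone (G' G K)) with ((gone G, zzero K) : G' G K). lia.
Qed.

Lemma L2 n c : ball_card_le (S' G S K) n c -> ball_card_le S n c.
Proof.
  intros Hc l Hnd Hl. rewrite <- (length_map (fun g => ((g, zzero K) : G' G K))).
  apply Hc. apply lift_nodup; auto.
  intros x Hx. apply in_map_iff in Hx. destruct Hx as [g [<- Hg]]. apply lift_ball; auto.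
Qed.

Lemma L3 n c : ball_card_ge S n c -> ball_card_ge (S' G S K) n c.
Proof.
  intros [l [Hnd [Hl Hc]]]. exists (map (fun g => ((g, zzero K) : G' G K)) l).
  split. apply lift_nodup; auto. split.
  intros x Hx. apply in_map_iff in Hx. destruct Hx as [g [<- Hg]]. apply lift_ball; auto.
  rewrite length_map; auto.
Qed.

Lemma L4 n c : 0 < c -> ball_card_ge (S' G S K) n c ->
  ball_card_ge S n (c / (2 * INR (Datatypes.S K))).
Proof.
  intros Hc [l' [Hnd [Hl Hlen]]].
  pose proof (lt_0_INR (Datatypes.S K) (Nat.lt_0_succ K)) as HN.
  apply NNPP. intro Hno.
  assert (Hle : ball_card_le S n (c / (2 * INR (Datatypes.S K)))).
  { intros l Hn Hb. apply Rnot_lt_le. intro Hlt. apply Hno. exists l. repeat split; auto. lra. }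
  pose proof (L1 _ _ Hle l' Hnd Hl).
  assert (INR (Datatypes.S K) * (c / (2 * INR (Datatypes.S K))) = c / 2) by (field; lra).
  lra.
Qed.
End Count.

Fixpoint pos {V : Type} (x : V) (l : list V) : nat :=
  match l with
  | nil => 0
  | y :: l => if excluded_middle_informative (x = y) then 0 else Datatypes.S (pos x l)
  end.

Lemma pos_lt {V : Type} (x : V) l : In x l -> (pos x l < length l)%nat.
Proof.
  induction l as [|y l IH]; simpl; intro H. destruct H.
  destruct (excluded_middle_informative (x = y)). lia.
  destruct H. congruence. specialize (IH H). lia.
Qed.

Lemma pos_nth {V : Type} (x d : V) l : In x l -> nth (pos x l) l d = x.
Proof.
  induction l as [|y l IH]; simpl; intro H. destruct H.
  destruct (excluded_middle_informative (x = y)). congruence.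
  destruct H. congruence. auto.
Qed.

Fixpoint ballL {V : Type} (nb : V -> list V) (r : nat) (x : V) : list V :=
  match r with
  | O => x :: nil
  | Datatypes.S r => x :: flat_map (ballL nb r) (nb x)
  end.

Fixpoint Mb (D r : nat) : nat :=
  match r with O => 1 | Datatypes.S r => 1 + D * Mb D r end.

Lemma flat_map_len {A B : Type} (f : A -> list B) m l :
  (forall x, (length (f x) <= m)%nat) -> (length (flat_map f l) <= length l * m)%nat.
Proof.
  intro H. induction l as [|x l IH]; simpl. lia.
  rewrite length_app. specialize (H x). lia.
Qed.

Lemma ballL_len {V : Type} (nb : V -> list V) D :
  (forall x, (length (nb x) <= D)%nat) -> forall r x, (length (ballL nb r x) <= Mb D r)%nat.
Proof.
  intros H r. induction r as [|r IH]; intro x; simpl. lia.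
  pose proof (flat_map_len (ballL nb r) (Mb D r) (nb x) IH).
  pose proof (Nat.mul_le_mono_r _ _ (Mb D r) (H x)). lia.
Qed.

Lemma ballL_walk {V : Type} (adj : V -> V -> Prop) (nb : V -> list V) :
  (forall x y, adj x y -> In y (nb x)) ->
  forall n x y, walk adj n x y -> forall r, (n <= r)%nat -> In y (ballL nb r x).
Proof.
  intros Hnb n x y W. induction W; intros r Hr.
  - destruct r; simpl; auto.
  - destruct r as [|r]. lia. simpl. right. apply in_flat_map.
    exists y. split. apply Hnb; auto. apply IHW. lia.
Qed.

Theorem lemma4p1 :
  forall (V : Type) (adj : V -> V -> Prop),
    is_graph adj -> bounded_geometry adj ->
  forall (G : group) (S : list G),
    fin_sym_gen_set S -> polynomial_growth S ->
  forall phi : V -> G,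
    rough_isometry (gdist adj) (word_dist S) phi ->
  exists (G' : group) (S' : list G'),
    fin_sym_gen_set S' /\ polynomial_growth S' /\
    (forall D : Z, homogeneous_dimension S D <-> homogeneous_dimension S' D) /\
    exists phi' : V -> G',
      (forall x y, phi' x = phi' y -> x = y) /\
      rough_isometry (gdist adj) (word_dist S') phi'.
Proof.
  intros V adj [Hsym [Hnl [Hconn Hlf]]] [Dl [_ Hdeg]] G S HS Hpg phi [a [b [Ha [Hb [Hd Hcov]]]]].
  destruct (Hcov (gone G)) as [x0 _].
  set (nb := fun x => epsilon (inhabits nil)
                 (fun l => (length l <= Dl)%nat /\ forall y, adj x y -> In y l)).
  assert (Hnb : forall x, (length (nb x) <= Dl)%nat /\ forall y, adj x y -> In y (nb x)).
  { intro x. unfold nb. apply epsilon_spec. apply Hdeg. }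
  destruct (nat_above (a * b)) as [R HR].
  assert (Hfib : forall x y, phi x = phi y -> In y (ballL nb R x)).
  { intros x y E. apply (ballL_walk adj nb (fun x y H => proj2 (Hnb x) y H) (gdist adj x y)).
    apply gdist_walk. apply Hconn.
    destruct (Hd x y) as [H1 _]. rewrite E in H1. unfold word_dist in H1. rewrite gdist_refl in H1. simpl in H1.
    apply INR_le.
    assert (INR (gdist adj x y) <= a * b).
    { assert (0 < a) by lra.
      apply Rmult_le_compat_l with (r := a) in H1; [|lra].
      rewrite Rmult_minus_distr_l, <- Rmult_assoc, Rinv_r, Rmult_1_l in H1; lra. }
    lra. }
  set (K := Mb Dl R).
  set (rep := fun g => epsilon (inhabits x0) (fun x => phi x = g)).
  assert (Hrep : forall x, phi (rep (phi x)) = phi x).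
  { intro x. unfold rep. apply (epsilon_spec (inhabits x0) (fun y => phi y = phi x)). exists x; auto. }
  assert (Hin : forall x, In x (ballL nb R (rep (phi x)))).
  { intro x. apply Hfib. auto. }
  set (lab := fun x => pos x (ballL nb R (rep (phi x)))).
  assert (Hlab : forall x, (lab x < Datatypes.S K)%nat).
  { intro x. unfold lab. pose proof (pos_lt _ _ (Hin x)).
    pose proof (ballL_len nb Dl (fun x => proj1 (Hnb x)) R (rep (phi x))). unfold K. lia. }
  pose proof (lt_0_INR (Datatypes.S K) (Nat.lt_0_succ K)) as HN.
  exists (G' G K), (S' G S K).
  split; [apply HS'; auto|].
  split.
  { destruct Hpg as [C [A [HC [HA Hp]]]]. exists (INR (Datatypes.S K) * C), A.
    split. apply Rmult_lt_0_compat; auto. split; auto.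
    intros n Hn. rewrite Rmult_assoc. apply L1; auto. }
  split.
  { intro D. split.
    - intros [C1 [C2 [H1 [H2 Hh]]]]. exists C1, (INR (Datatypes.S K) * C2).
      split; auto. split. apply Rmult_lt_0_compat; auto.
      intros n Hn. destruct (Hh n Hn) as [Hg Hl]. split.
      + apply L3; auto.
      + rewrite Rmult_assoc. apply L1; auto.
    - intros [C1 [C2 [H1 [H2 Hh]]]]. exists (C1 / (2 * INR (Datatypes.S K))), C2.
      split. apply Rdiv_lt_0_compat; lra. split; auto.
      intros n Hn. destruct (Hh n Hn) as [Hg Hl]. split.
      + assert (Hp : 0 < powerRZ (INR n) D).
        { apply powerRZ_lt. apply lt_0_INR. lia. }
        replace (C1 / (2 * INR (Datatypes.S K)) * powerRZ (INR n) D)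
          with (C1 * powerRZ (INR n) D / (2 * INR (Datatypes.S K))) by (field; lra).
        apply (L4 G S HS K). apply Rmult_lt_0_compat; auto. auto.
      + apply (L2 G S HS K). auto. }
  exists (fun x => ((phi x, zmk K (lab x)) : G' G K)).
  split.
  { intros x y E. injection E as E1 E2.
    assert (El : lab x = lab y).
    { change (lab x mod Datatypes.S K = lab y mod Datatypes.S K)%nat in E2.
      rewrite !Nat.mod_small in E2; auto. }
    rewrite <- (pos_nth x x0 (ballL nb R (rep (phi x))) (Hin x)).
    rewrite <- (pos_nth y x0 (ballL nb R (rep (phi y))) (Hin y)).
    unfold lab in El. rewrite E1 in *. rewrite El. reflexivity. }
  exists a, (b + 1). split; auto. split. lra. split.
  - intros x y. destruct (Hd x y) as [H1 H2].
    pose proof (d'_ge G S HS K ((phi x, zmk K (lab x)) : G' G K) (phi y, zmk K (lab y))) as Hge.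
    pose proof (d'_le G S HS K ((phi x, zmk K (lab x)) : G' G K) (phi y, zmk K (lab y))) as Hle.
    simpl fst in Hge, Hle. apply le_INR in Hge. apply le_INR in Hle. rewrite S_INR in Hle.
    split; lra.
  - intros [g h]. destruct (Hcov g) as [x Hx]. exists x.
    pose proof (d'_le G S HS K ((g, h) : G' G K) (phi x, zmk K (lab x))) as Hle.
    simpl fst in Hle. apply le_INR in Hle. rewrite S_INR in Hle. lra.
Qed.
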